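(* Let $M$ be a perfect matching for a self-contained finite bipartite graph $\mathcal{B}=\langle V,F,E\rangle$. Let $S_V^{(1)},\dots,S_V^{(n)}$ be a topological ordering of the strongly connected components of the directed graph $\mathcal{G}(\mathcal{B},M)_{\mathrm{mar}(F)}$, and for $i=1,\dots,n$ let $\mathcal{B}^{(i)}$ be the subgraph of $\mathcal{B}$ induced by $\bigcup_{j=i}^{n}(S_V^{(j)}\cup M(S_V^{(j)}))$. Then $\mathcal{B}^{(i)}$ is self-contained and $M(S_V^{(i)})$ is a minimal self-contained set in $\mathcal{B}^{(i)}$.
   Context: $\mathrm{adj}_{\mathcal{B}}(X)$ is the set of vertices adjacent to some vertex of $X$. A set $F'\subseteq F$ is self-contained in $\mathcal{B}$ if $|F'|=|\mathrm{adj}_{\mathcal{B}}(F')|$ and $|F''|\le|\mathrm{adj}_{\mathcal{B}}(F'')|$ for all $F''\subseteq F'$; a bipartite graph is self-contained if both its sides have equal size and its constraint side is self-contained; a non-empty self-contained set is minimal self-contained if no non-empty strict subset is self-contained. For a matching $M$ and vertex set $X$, $M(X)$ is the set of vertices matched to vertices of $X$. $\mathcal{G}(\mathcal{B},M)$ is the directed graph on $V\cup F$ with, for each $(v-f)\in E$, the edge $f\to v$ if $(v-f)\in M$ and $v\to f$ otherwise. $\mathcal{G}(\mathcal{B},M)_{\mathrm{mar}(F)}$ is the graph on $V$ with $x\to y$ iff $\mathcal{G}(\mathcal{B},M)$ has a directed path from $x$ to $y$ whose intermediate vertices all lie in $F$. A topological ordering of the strongly connected components means an ordering such that every edge between two distinct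 components goes from an earlier to a later component. *)

(* Defs.v *)
From Stdlib Require Import Relations.
From mathcomp Require Import all_boot.
Set Implicit Arguments. Unset Strict Implicit. Unset Printing Implicit Defensive.

(* Induced subgraphs are described by vertex subsets VS : {set V}, FS : {set F}
   (edges of the subgraph = edges of B between them). *)
Section Bip.
Variables (V F : finType) (E : V -> F -> bool).

Definition adjF (VS : {set V}) (X : {set F}) : {set V} :=
  [set v in VS | [exists f in X, E v f]].

Definition self_contained_set (VS : {set V}) (FS : {set F}) (F' : {set F}) : Prop :=
  F' \subset FS /\
  #|F'| = #|adjF VS F'| /\
  (forall F'' : {set F}, F'' \subset F' -> #|F''| <= #|adjF VS F''|).

Definition self_contained_graph (VS : {set V}) (FS : {set F}) : Prop :=
  #|VS| = #|FS| /\ self_contained_set VS FS FS.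

Definition minimal_self_contained (VS : {set V}) (FS : {set F}) (F' : {set F}) : Prop :=
  F' != set0 /\ self_contained_set VS FS F' /\
  (forall F'' : {set F}, F'' != set0 -> F'' \proper F' ->
     ~ self_contained_set VS FS F'').

Definition is_matching (M : {set V * F}) : Prop :=
  (forall e, e \in M -> E e.1 e.2) /\
  (forall e1 e2, e1 \in M -> e2 \in M -> e1.1 = e2.1 -> e1 = e2) /\
  (forall e1 e2, e1 \in M -> e2 \in M -> e1.2 = e2.2 -> e1 = e2).

Definition is_perfect_matching (M : {set V * F}) : Prop :=
  is_matching M /\
  (forall v : V, exists f : F, (v, f) \in M) /\
  (forall f : F, exists v : V, (v, f) \in M).

Definition matchedV (M : {set V * F}) (X : {set V}) : {set F} :=
  [set f | [exists v in X, (v, f) \in M]].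

Definition GBM (M : {set V * F}) : rel (V + F) :=
  fun a b => match a, b with
  | inl v, inr f => E v f && ((v, f) \notin M)
  | inr f, inl v => (v, f) \in M
  | _, _ => false
  end.

(* G(B,M)_{mar(F)}: x -> y iff there is a directed path x, f_1, ..., f_k, y
   in G(B,M) all of whose intermediate vertices f_i lie in F. *)
Definition GBM_marF (M : {set V * F}) (x y : V) : Prop :=
  exists fs : seq F, path (GBM M) (inl x) (rcons (map inr fs) (inl y)).

Definition marF_reach (M : {set V * F}) : V -> V -> Prop :=
  clos_refl_trans V (GBM_marF M).

Definition is_scc (M : {set V * F}) (C : {set V}) : Prop :=
  exists x : V, forall y : V,
    y \in C <-> (marF_reach M x y /\ marF_reach M y x).

Definition scc_topological_ordering (M : {set V * F}) (n : nat)
    (S : 'I_n -> {set V}) : Prop :=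
  injective S /\
  (forall C : {set V}, is_scc M C <-> exists i : 'I_n, S i = C) /\
  (forall (i j : 'I_n) (x y : V), x \in S i -> y \in S j ->
     GBM_marF M x y -> i != j -> i < j).
End Bip.

(* Main.v *)
Require Import Defs.
From Stdlib Require Import Relations.
From mathcomp Require Import all_boot.
Set Implicit Arguments. Unset Strict Implicit. Unset Printing Implicit Defensive.

Section Aux.
Variables (V F : finType) (E : V -> F -> bool) (M : {set V * F}).
Hypothesis HM : is_perfect_matching E M.

Lemma exV v : exists f, (v, f) \in M. Proof. by case: HM => _ [H _]. Qed.
Lemma exF f : exists v, (v, f) \in M. Proof. by case: HM => _ [_ H]. Qed.

Definition hh (v : V) : F := @xchoose _ (fun f => (v, f) \in M) (exV v).
Definition gg (f : F) : V := @xchoose _ (fun v => (v, f) \in M) (exF f).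

Lemma hP v : (v, hh v) \in M. Proof. exact: (xchooseP (exV v)). Qed.
Lemma gP f : (gg f, f) \in M. Proof. exact: (xchooseP (exF f)). Qed.

Lemma EM v f : (v, f) \in M -> E v f.
Proof. by case: HM => [[H _] _] /H. Qed.

Lemma hM v f : (v, f) \in M -> hh v = f.
Proof. case: HM => [[_ [H _]] _] vf. by have := H _ _ (hP v) vf erefl => -[]. Qed.
Lemma gM v f : (v, f) \in M -> gg f = v.
Proof. case: HM => [[_ [_ H]] _] vf. by have := H _ _ (gP f) vf erefl => -[]. Qed.

Lemma hK : cancel gg hh. Proof. by move=> f; apply: hM (gP f). Qed.
Lemma gK : cancel hh gg. Proof. by move=> v; apply: gM (hP v). Qed.
Lemma h_inj : injective hh. Proof. exact: can_inj gK. Qed.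
Lemma g_inj : injective gg. Proof. exact: can_inj hK. Qed.

Lemma matchedVE X : matchedV M X = hh @: X.
Proof.
apply/setP=> f; rewrite inE; apply/existsP/imsetP.
- by case=> v /andP[vX vf]; exists v => //; rewrite (hM vf).
- by case=> v vX ->; exists v; rewrite vX hP.
Qed.

Lemma adj_sub (VS : {set V}) (F'' : {set F}) : F'' \subset hh @: VS -> gg @: F'' \subset adjF E VS F''.
Proof.
move=> sub; apply/subsetP => v /imsetP[f fF ->]; rewrite inE; apply/andP; split.
- by have := subsetP sub f fF; case/imsetP=> w wVS ->; rewrite gK.
- by apply/existsP; exists f; rewrite fF /=; exact: (EM (gP f)).
Qed.

Lemma Hall (VS : {set V}) (F'' : {set F}) : F'' \subset hh @: VS -> #|F''| <= #|adjF E VS F''|.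
Proof.
move=> sub; rewrite -(card_imset _ g_inj); exact: subset_leq_card (adj_sub sub).
Qed.

Lemma sc_lemma (VS : {set V}) (FS : {set F}) (X : {set V}) : X \subset VS -> hh @: X \subset FS ->
  adjF E VS (hh @: X) \subset X -> self_contained_set E VS FS (hh @: X).
Proof.
move=> XV XF AX; split => //; split.
- apply/eqP; rewrite eqn_leq Hall ?imsetS // card_imset; last exact: h_inj.
  exact: subset_leq_card.
- move=> F'' sub; apply: Hall; apply: subset_trans sub (imsetS _ _); exact: XV.
Qed.

Lemma marF_edge u v : GBM_marF E M u v -> exists f, E u f /\ (v, f) \in M.
Proof.
case=> [[|f [|f' fs]]] /=.
- by [].
- by case/andP=> /andP[Euf _] /andP[vf _]; exists f.
- by rewrite andbF.
Qed.

Lemma cross (R : V -> V -> Prop) (X : pred V) (P : V -> Prop) z w :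
  clos_refl_trans_1n V R z w -> P z -> (forall a b, P a -> R a b -> P b) ->
  X w -> ~~ X z -> exists u v, [/\ P u, R u v, ~~ X u & X v].
Proof.
move=> H; elim: H => [x|x y w' Rxy _ IH] Px HP Xw nXx.
- by rewrite Xw in nXx.
- case: (boolP (X y)) => Xy; first by exists x, y.
  exact: IH (HP _ _ Px Rxy) HP Xw Xy.
Qed.

End Aux.

Theorem lemma40 (V F : finType) (E : V -> F -> bool) (M : {set V * F})
    (n : nat) (S : 'I_n -> {set V}) :
  self_contained_graph E [set: V] [set: F] ->
  is_perfect_matching E M ->
  scc_topological_ordering E M S ->
  forall i : 'I_n,
    let Vi := \bigcup_(j : 'I_n | i <= j) S j in
    let Fi := \bigcup_(j : 'I_n | i <= j) matchedV M (S j) in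
    self_contained_graph E Vi Fi /\
    minimal_self_contained E Vi Fi (matchedV M (S i)).
Proof.
move=> _ HM [Sinj [Sscc Sord]] i Vi Fi.
have FiE : Fi = hh HM @: Vi.
  rewrite /Fi /Vi; apply/setP => f; apply/bigcupP/imsetP.
    by case=> j ij; rewrite (matchedVE HM) => /imsetP[v vS ->]; exists v => //; apply/bigcupP; exists j.
  by case=> v /bigcupP[j ij vS] ->; exists j => //; rewrite (matchedVE HM); apply: imset_f.
have SiVi : S i \subset Vi by exact: (bigcup_sup i (leqnn i)).
split.
  split; first by rewrite FiE card_imset //; exact: h_inj.
  rewrite FiE; apply: sc_lemma => //.
  by apply/subsetP => v; rewrite inE => /andP[].
have sccSi : is_scc E M (S i) by apply/Sscc; exists i.
case: sccSi => c Hc.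
have cS : c \in S i by apply/Hc; split; apply: rt_refl.
rewrite (matchedVE HM); split.
  by apply/set0Pn; exists (hh HM c); apply/imsetP; exists c.
split.
  apply: sc_lemma => //; first by rewrite FiE; exact: imsetS.
  apply/subsetP => v; rewrite inE => /andP[vVi /existsP[f /andP[/imsetP[y yS ->] Evy]]].
  case: (v =P y) => [->//|nvy].
  have vy : GBM_marF E M v y.
    exists [:: hh HM y]; rewrite /= Evy /= (hP HM y) !andbT.
    apply/negP => /(gM HM); rewrite gK => Hy; by apply: nvy.
  case/bigcupP: vVi => j ij vSj.
  case: (eqVneq j i) => [<-//| nji].
  by have := Sord j i v y vSj yS vy nji; rewrite ltnNge ij.
move=> F'' nz prop [sub [card _]].
set X := gg HM @: F''.
have F''sub : F'' \subset hh HM @: S i := proper_sub prop.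
have XS : X \subset S i.
  apply/subsetP=> v /imsetP[f fF ->]; have := subsetP F''sub f fF.
  by case/imsetP => y yS ->; rewrite gK.
have XA : X \subset adjF E Vi F'' := adj_sub (subset_trans F''sub (imsetS _ SiVi)).
have AX : adjF E Vi F'' = X.
  apply/eqP; rewrite eq_sym eqEcard XA /= -card card_imset //; exact: g_inj.
have hX : hh HM @: X = F''.
  apply/setP=> f; apply/imsetP/idP => [[v /imsetP[f' f'F ->] ->]|fF].
    by rewrite hK.
  by exists (gg HM f); [apply: imset_f | rewrite hK].
have [x xS xX] : exists2 x, x \in S i & x \notin X.
  case: (boolP (S i \subset X)) => [SX|]; last by case/subsetPn => x; exists x.
  have XSi : X = S i by apply/eqP; rewrite eqEsubset XS SX.
  by move: prop; rewrite -hX XSi properE subxx andbF.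
case/set0Pn: nz => f0 f0F.
have yX : gg HM f0 \in X by apply: imset_f.
have rxy : marF_reach E M x (gg HM f0).
  have [_ rxc] := (Hc x).1 xS.
  have [rcy _] := (Hc (gg HM f0)).1 (subsetP XS _ yX).
  exact: rt_trans rxc rcy.
have := @cross V (GBM_marF E M) (fun v => v \in X) (marF_reach E M c) x (gg HM f0)
  (clos_rt_rt1n _ _ _ _ rxy).
case.
- by have [] := (Hc x).1 xS.
- by move=> a b ca ab; apply: rt_trans ca (rt_step _ _ _ _ ab).
- exact: yX.
- exact: xX.
move=> u [v [cu uv uX vX]].
have uS : u \in S i.
  apply/Hc; split => //.
  have [_ vc] := (Hc v).1 (subsetP XS _ vX).
  exact: rt_trans (rt_step _ _ _ _ uv) vc.
case: (marF_edge uv) => f [Euf vf].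
have fF : f \in F''.
  case/imsetP: vX => f1 f1F vE.
  by rewrite -(hM HM vf) vE hK.
have : u \in adjF E Vi F''.
  rewrite inE (subsetP SiVi _ uS) /=; apply/existsP; exists f; by rewrite fF.
by rewrite AX (negbTE uX).
Qed.
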